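(* Let $M$ be a countable transitive model of $\mathrm{ZFU}_R$, let $\mathbb{P} \in M$ be a forcing poset, and let $G$ be an $M$-generic filter over $\mathbb{P}$. Then $M[G] = M[G]_{\#}$, i.e. the generic extension built from the new $\mathbb{P}$-names coincides with the generic extension built from the old $\mathbb{P}$-names in which each urelement is its own name.
   Context: $\mathrm{ZFU}_R$ is ZF with urelements formulated with Replacement: Axiom $\mathcal{A}$ (urelements have no members), Extensionality for sets, Foundation, Pairing, Union, Powerset, Separation, Infinity, and Replacement. Old names: $\tau$ is a $\mathbb{P}$-name$_{\#}$ iff $\tau$ is a urelement or a set of pairs $\langle \sigma, p\rangle$ with $\sigma$ a $\mathbb{P}$-name$_{\#}$ and $p \in \mathbb{P}$; $M^{\mathbb{P}}_{\#}$ is the class of such names in $M$; $\tau_G = \tau$ if $\tau$ is a urelement, and otherwise $\tau_G = \{\sigma_G : \exists p \in G\ \langle \sigma, p\rangle \in \tau\}$; $M[G]_{\#} = \{\tau_G : \tau \in M^{\mathbb{P}}_{\#}\}$. New names: $\dot{x}$ is a $\mathbb{P}$-name iff (i) $\dot{x}$ is a set of pairs $\langle y, p\rangle$ with $p \in \mathbb{P}$ and $y$ either a $\mathbb{P}$-name or a urelement, and (ii) whenever $\langle a, p\rangle, \langle y, q\rangle \in \dot{x}$ with $a$ a urelement and $a \neq y$, $p$ and $q$ are incompatible; $M^{\mathbb{P}}$ is the class of such names in $M$; $\dot{x}_G = a$ if $a$ is a urelement with $\langle a, p\rangle \in \dot{x}$ for some $p \in G$, and otherwise $\dot{x}_G =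 \{\dot{y}_G : \langle \dot{y}, p\rangle \in \dot{x},\ \dot{y} \in M^{\mathbb{P}},\ p \in G\}$; $M[G] = \{\dot{x}_G : \dot{x} \in M^{\mathbb{P}}\}$. *)

(* Defs.v *)
From Stdlib Require Import Arith.

Section ZFU.
Context {U : Type} (mem : U -> U -> Prop) (ur : U -> Prop).

Record ZFU_universe : Prop := {
  amb_A : forall a x, ur a -> ~ mem x a;
  amb_ext : forall x y, ~ ur x -> ~ ur y -> (forall z, mem z x <-> mem z y) -> x = y;
  amb_wf : well_founded mem;
  amb_pair : forall x y, exists z, ~ ur z /\ forall w, mem w z <-> (w = x \/ w = y);
  amb_union : forall F, exists A, ~ ur A /\
      forall x, mem x A <-> exists Y, mem Y F /\ mem x Y;
  amb_power : forall x, exists y, ~ ur y /\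
      forall z, mem z y <-> (~ ur z /\ forall w, mem w z -> mem w x);
  amb_sep : forall (P : U -> Prop) x, exists y, ~ ur y /\
      forall z, mem z y <-> (mem z x /\ P z);
  amb_repl : forall (R : U -> U -> Prop) a,
      (forall x, mem x a -> forall y y', R x y -> R x y' -> y = y') ->
      exists b, ~ ur b /\ forall y, mem y b <-> exists x, mem x a /\ R x y;
  amb_inf : exists x, ~ ur x /\
      (exists e, mem e x /\ ~ ur e /\ forall w, ~ mem w e) /\
      (forall y, mem y x -> exists s, mem s x /\ ~ ur s /\
          forall w, mem w s <-> (mem w y \/ w = y))
}.

(** * First-order formulas of the language {mem, Ur} (de Bruijn variables)
    and satisfaction in the substructure with domain D. *)
Inductive form : Type :=
| FMem : nat -> nat -> form
| FEq  : nat -> nat -> form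
| FUr  : nat -> form
| FBot : form
| FImp : form -> form -> form
| FAll : form -> form.

Definition scons (x : U) (e : nat -> U) : nat -> U :=
  fun n => match n with 0 => x | S k => e k end.

Fixpoint sat (D : U -> Prop) (e : nat -> U) (phi : form) : Prop :=
  match phi with
  | FMem i j => mem (e i) (e j)
  | FEq i j => e i = e j
  | FUr i => ur (e i)
  | FBot => False
  | FImp p q => sat D e p -> sat D e q
  | FAll p => forall x, D x -> sat D (scons x e) p
  end.

Definition env_in (D : U -> Prop) (e : nat -> U) : Prop := forall n, D (e n).

Record models_ZFU_R (D : U -> Prop) : Prop := {
  m_A : forall a, D a -> ur a -> forall x, D x -> ~ mem x a;
  m_ext : forall x y, D x -> D y -> ~ ur x -> ~ ur y ->
      (forall z, D z -> (mem z x <-> mem z y)) -> x = y;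
  m_found : forall x, D x -> (exists y, D y /\ mem y x) ->
      exists y, D y /\ mem y x /\ ~ (exists z, D z /\ mem z y /\ mem z x);
  m_pair : forall x y, D x -> D y -> exists z, D z /\ ~ ur z /\ mem x z /\ mem y z;
  m_union : forall F, D F -> exists A, D A /\ ~ ur A /\
      forall Y x, D Y -> D x -> mem x Y -> mem Y F -> mem x A;
  m_power : forall x, D x -> exists y, D y /\ ~ ur y /\
      forall z, D z -> ~ ur z -> (forall w, D w -> mem w z -> mem w x) -> mem z y;
  m_sep : forall (phi : form) (e : nat -> U), env_in D e ->
      forall x, D x -> exists y, D y /\ ~ ur y /\
        forall z, D z -> (mem z y <-> (mem z x /\ sat D (scons z e) phi));
  m_inf : exists x, D x /\ ~ ur x /\
      (exists o, D o /\ mem o x /\ ~ ur o /\ forall w, D w -> ~ mem w o) /\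
      (forall y, D y -> mem y x -> exists s, D s /\ mem s x /\ ~ ur s /\
          forall w, D w -> (mem w s <-> (mem w y \/ w = y)));
  m_repl : forall (phi : form) (e : nat -> U), env_in D e ->
      forall a, D a ->
      (forall x, D x -> mem x a ->
         exists y, D y /\ sat D (scons y (scons x e)) phi /\
           forall y', D y' -> sat D (scons y' (scons x e)) phi -> y' = y) ->
      exists b, D b /\ ~ ur b /\
        forall x, D x -> mem x a ->
          exists y, D y /\ mem y b /\ sat D (scons y (scons x e)) phi
}.

Definition dom (m : U) : U -> Prop := fun x => mem x m.

Definition transitive_set (m : U) : Prop :=
  forall x y, mem x m -> mem y x -> mem y m.

Definition countable_set (m : U) : Prop :=
  exists f : U -> nat, forall x y, mem x m -> mem y m -> f x = f y -> x = y.

Definition ctm_ZFU_R (m : U) : Prop :=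
  ~ ur m /\ transitive_set m /\ countable_set m /\ models_ZFU_R (dom m).

Definition is_pair (z a b : U) : Prop :=
  ~ ur z /\ forall w, mem w z <->
    ((~ ur w /\ forall u, mem u w <-> u = a) \/
     (~ ur w /\ forall u, mem u w <-> (u = a \/ u = b))).

Definition pair_in (t a b : U) : Prop := exists z, mem z t /\ is_pair z a b.

(** Forcing posets (P, le, one), with le a set of pairs: a preorder with a
    largest element one (Kunen's convention). *)
Section Forcing.
Variables (P le one : U).

Definition leP (p q : U) : Prop := pair_in le p q.

Definition forcing_poset : Prop :=
  ~ ur P /\ ~ ur le /\
  (forall z, mem z le -> exists p q, is_pair z p q /\ mem p P /\ mem q P) /\
  mem one P /\
  (forall p, mem p P -> leP p p) /\
  (forall p q r, mem p P -> mem q P -> mem r P -> leP p q -> leP q r -> leP p r) /\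
  (forall p, mem p P -> leP p one).

Definition compatible (p q : U) : Prop :=
  exists r, mem r P /\ leP r p /\ leP r q.

Definition dense (D : U) : Prop :=
  (forall d, mem d D -> mem d P) /\
  forall p, mem p P -> exists d, mem d D /\ leP d p.

Definition filter (G : U) : Prop :=
  (forall p, mem p G -> mem p P) /\
  mem one G /\
  (forall p q, mem p G -> mem q P -> leP p q -> mem q G) /\
  (forall p q, mem p G -> mem q G -> exists r, mem r G /\ leP r p /\ leP r q).

Definition generic (m G : U) : Prop :=
  filter G /\ forall D, mem D m -> dense D -> exists p, mem p D /\ mem p G.

Inductive old_name : U -> Prop :=
| old_name_ur : forall a, ur a -> old_name a
| old_name_set : forall t, ~ ur t ->
    (forall z, mem z t -> exists s p, is_pair z s p /\ old_name s /\ mem p P) ->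
    old_name t.

Inductive old_eval (G : U) : U -> U -> Prop :=
| old_eval_ur : forall a, ur a -> old_eval G a a
| old_eval_set : forall t x, ~ ur t -> ~ ur x ->
    (forall z, mem z x -> exists s p, pair_in t s p /\ mem p G /\ old_eval G s z) ->
    (forall s p, pair_in t s p -> mem p G -> exists z, mem z x /\ old_eval G s z) ->
    old_eval G t x.

Inductive new_name : U -> Prop :=
| new_name_intro : forall x, ~ ur x ->
    (forall z, mem z x -> exists y p, is_pair z y p /\ mem p P /\
        (new_name y \/ ur y)) ->
    (forall a p y q, ur a -> pair_in x a p -> pair_in x y q -> a <> y ->
        ~ compatible p q) ->
    new_name x.

Inductive new_eval (G : U) : U -> U -> Prop :=
| new_eval_ur : forall x a p, ur a -> pair_in x a p -> mem p G -> new_eval G x a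
| new_eval_set : forall x v,
    ~ (exists a p, ur a /\ pair_in x a p /\ mem p G) ->
    ~ ur v ->
    (forall z, mem z v -> exists y p, pair_in x y p /\ new_name y /\ mem p G /\
        new_eval G y z) ->
    (forall y p, pair_in x y p -> new_name y -> mem p G ->
        exists z, mem z v /\ new_eval G y z) ->
    new_eval G x v.

Definition ext_old (m G : U) : U -> Prop :=
  fun x => exists t, mem t m /\ old_name t /\ old_eval G t x.

Definition ext_new (m G : U) : U -> Prop :=
  fun x => exists t, mem t m /\ new_name t /\ new_eval G t x.

End Forcing.
End ZFU.

(* Main.v *)
Require Import Defs.
From Stdlib Require Import Arith Lia Classical.
From Stdlib Require Import Wellfounded.Transitive_Closure Wellfounded.Inclusion Relations.Relation_Operators.

Definition upr (r : nat -> nat) : nat -> nat :=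
  fun n => match n with 0 => 0 | S k => S (r k) end.
Fixpoint ren (r : nat -> nat) (f : form) : form :=
  match f with
  | FMem i j => FMem (r i) (r j)
  | FEq i j => FEq (r i) (r j)
  | FUr i => FUr (r i)
  | FBot => FBot
  | FImp a b => FImp (ren r a) (ren r b)
  | FAll a => FAll (ren (upr r) a)
  end.

Section Syn.
Context {U : Type} (mem : U -> U -> Prop) (ur : U -> Prop) (D : U -> Prop).

Lemma sat_ext : forall f (e e' : nat -> U), (forall n, e n = e' n) ->
  (sat mem ur D e f <-> sat mem ur D e' f).
Proof.
  induction f; intros e e' H; simpl.
  - rewrite !H; tauto.
  - rewrite !H; tauto.
  - rewrite !H; tauto.
  - tauto.
  - rewrite (IHf1 e e' H), (IHf2 e e' H); tauto.
  - split; intros H1 x Dx; specialize (H1 x Dx);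
    [rewrite <- (IHf (scons x e) (scons x e')) | rewrite (IHf (scons x e) (scons x e'))];
    auto; intros [|n]; simpl; auto.
Qed.

Lemma sat_ren : forall f r (e : nat -> U),
  sat mem ur D e (ren r f) <-> sat mem ur D (fun n => e (r n)) f.
Proof.
  induction f; intros r e; simpl; try tauto.
  - rewrite IHf1, IHf2; tauto.
  - split; intros H1 x Dx; specialize (H1 x Dx).
    + rewrite IHf in H1. revert H1. apply sat_ext. intros [|n]; reflexivity.
    + rewrite IHf. revert H1. apply sat_ext. intros [|n]; reflexivity.
Qed.
End Syn.

Definition ilv {U} (e c : nat -> U) (n : nat) : U :=
  if Nat.even n then e (Nat.div2 n) else c (Nat.div2 n).
Definition ilvf (g h : nat -> nat) (n : nat) : nat :=
  if Nat.even n then g (Nat.div2 n) else h (Nat.div2 n).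

Lemma even2 k : Nat.even (2*k) = true.
Proof. rewrite Nat.even_mul. reflexivity. Qed.
Lemma even21 k : Nat.even (2*k+1) = false.
Proof. rewrite Nat.even_add, Nat.even_mul. reflexivity. Qed.
Lemma div22 k : Nat.div2 (2*k) = k.
Proof. apply Nat.div2_double. Qed.
Lemma div221 k : Nat.div2 (2*k+1) = k.
Proof. rewrite Nat.add_1_r. apply Nat.div2_succ_double. Qed.

Lemma ilv_e {U} (e c : nat -> U) k : ilv e c (2*k) = e k.
Proof. unfold ilv. rewrite even2, div22. reflexivity. Qed.
Lemma ilv_o {U} (e c : nat -> U) k : ilv e c (2*k+1) = c k.
Proof. unfold ilv. rewrite even21, div221. reflexivity. Qed.
Lemma ilvf_e g h k : ilvf g h (2*k) = g k.
Proof. unfold ilvf. rewrite even2, div22. reflexivity. Qed.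
Lemma ilvf_o g h k : ilvf g h (2*k+1) = h k.
Proof. unfold ilvf. rewrite even21, div221. reflexivity. Qed.

Lemma nat_eo n : exists k, n = 2*k \/ n = 2*k+1.
Proof. destruct (Nat.Even_or_Odd n) as [[k H]|[k H]]; exists k; auto. Qed.

Lemma ilv_e2 {U} (e c : nat -> U) k : ilv e c (k + (k + 0)) = e k.
Proof. change (k + (k+0)) with (2*k). apply ilv_e. Qed.
Lemma ilv_o2 {U} (e c : nat -> U) k : ilv e c (k + (k + 0) + 1) = c k.
Proof. change (k + (k+0)) with (2*k). apply ilv_o. Qed.
Lemma ilv_o3 {U} (e c : nat -> U) k : ilv e c (S (k + (k + 0))) = c k.
Proof. rewrite <- Nat.add_1_r. apply ilv_o2. Qed.
Lemma ilv_o4 {U} (e c : nat -> U) k : ilv e c (S (2*k)) = c k.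
Proof. rewrite <- Nat.add_1_r. apply ilv_o. Qed.
Ltac ilvs := repeat (first [rewrite ilv_e | rewrite ilv_o | rewrite ilvf_e | rewrite ilvf_o
  | rewrite ilv_e2 | rewrite ilv_o2 | rewrite ilv_o3 | rewrite ilv_o4]; cbv beta).
Ltac ilvs_old := repeat (first [rewrite ilv_e | rewrite ilv_o | rewrite ilvf_e | rewrite ilvf_o]; cbv beta).
Ltac eo n := let k := fresh "k" in let H := fresh in
  destruct (nat_eo n) as [k [H|H]]; subst n; cbv beta;
  repeat (first [rewrite ilv_e | rewrite ilv_o | rewrite ilvf_e | rewrite ilvf_o]; cbv beta).

Section Model.
Variables (U : Type) (mem : U -> U -> Prop) (ur : U -> Prop).
Hypothesis HV : ZFU_universe mem ur.
Variable m : U.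
Hypothesis Hm : ctm_ZFU_R mem ur m.
Variable P0 : U.
Hypothesis HP0 : mem P0 m.

Notation D := (dom mem m).
Notation SAT := (sat mem ur (dom mem m)).
Notation ENV := (env_in (dom mem m)).

Definition Def (Q : (nat -> U) -> Prop) : Prop :=
  exists f c, ENV c /\ forall e, ENV e -> (SAT (ilv e c) f <-> Q e).

Lemma env_ilv e c : ENV e -> ENV c -> ENV (ilv e c).
Proof. intros He Hc n. unfold ilv. destruct (Nat.even n); auto. Qed.

Lemma env_scons x e : D x -> ENV e -> ENV (scons x e).
Proof. intros Hx He [|n]; simpl; auto. Qed.

Lemma env_cst : ENV (fun _ => P0).
Proof. intros n; exact HP0. Qed.

Lemma Def_ext (Q Q' : (nat -> U) -> Prop) :
  (forall e, ENV e -> (Q e <-> Q' e)) -> Def Q -> Def Q'.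
Proof.
  intros H [f [c [Hc Hf]]]. exists f, c. split; auto.
  intros e He. rewrite Hf by auto. apply H; auto.
Qed.

Lemma Def_mem i j : Def (fun e => mem (e i) (e j)).
Proof.
  exists (FMem (2*i) (2*j)), (fun _ => P0). split. apply env_cst.
  intros e He. cbn [sat]. rewrite !ilv_e. tauto.
Qed.
Lemma Def_eq i j : Def (fun e => e i = e j).
Proof.
  exists (FEq (2*i) (2*j)), (fun _ => P0). split. apply env_cst.
  intros e He. cbn [sat]. rewrite !ilv_e. tauto.
Qed.
Lemma Def_ur i : Def (fun e => ur (e i)).
Proof.
  exists (FUr (2*i)), (fun _ => P0). split. apply env_cst.
  intros e He. cbn [sat]. rewrite !ilv_e. tauto.
Qed.
Lemma Def_bot : Def (fun e => False).
Proof.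
  exists FBot, (fun _ => P0). split. apply env_cst. intros e He. simpl. tauto.
Qed.

Lemma Def_merge Q1 Q2 : Def Q1 -> Def Q2 -> exists f1 f2 c, ENV c /\
  (forall e, ENV e -> (SAT (ilv e c) f1 <-> Q1 e)) /\
  (forall e, ENV e -> (SAT (ilv e c) f2 <-> Q2 e)).
Proof.
  intros [f1 [c1 [Hc1 H1]]] [f2 [c2 [Hc2 H2]]].
  exists (ren (ilvf (fun k => 2*k) (fun k => 2*(2*k)+1)) f1),
         (ren (ilvf (fun k => 2*k) (fun k => 2*(2*k+1)+1)) f2), (ilv c1 c2).
  split; [apply env_ilv; auto|split]; intros e He.
  - rewrite sat_ren, <- H1 by auto. apply sat_ext. intros n. eo n; reflexivity.
  - rewrite sat_ren, <- H2 by auto. apply sat_ext. intros n. eo n; reflexivity.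
Qed.

Lemma Def_imp Q1 Q2 : Def Q1 -> Def Q2 -> Def (fun e => Q1 e -> Q2 e).
Proof.
  intros H1 H2. destruct (Def_merge _ _ H1 H2) as [f1 [f2 [c [Hc [A B]]]]].
  exists (FImp f1 f2), c. split; auto. intros e He. simpl. rewrite A, B by auto. tauto.
Qed.

Lemma Def_allb Q : Def Q -> Def (fun e => forall x, D x -> Q (scons x e)).
Proof.
  intros [f [c [Hc H]]].
  exists (FAll (ren (ilvf (fun k => match k with 0 => 0 | S k' => S (2*k') end)
                          (fun k => S (2*k+1))) f)), c.
  split; auto. intros e He. simpl.
  split; intros H1 x Hx; specialize (H1 x Hx).
  - rewrite sat_ren in H1. apply H; [apply env_scons; auto|].
    revert H1. apply sat_ext. intros n. eo n; [destruct k|]; unfold scons; cbv beta iota; ilvs; try reflexivity.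
    all: rewrite Nat.add_1_r; cbv beta iota; ilvs; reflexivity.
  - rewrite sat_ren. apply H in H1; [|apply env_scons; auto].
    revert H1. apply sat_ext. intros n. eo n; [destruct k|]; unfold scons; cbv beta iota; ilvs; try reflexivity.
    all: rewrite Nat.add_1_r; cbv beta iota; ilvs; reflexivity.
Qed.

Lemma Def_const Q k : Def Q -> D k -> Def (fun e => Q (scons k e)).
Proof.
  intros [f [c [Hc H]]] Hk.
  exists (ren (ilvf (fun j => match j with 0 => 1 | S j' => 2*j' end)
                    (fun j => 2*(S j)+1)) f), (scons k c).
  split; [apply env_scons; auto|]. intros e He.
  rewrite sat_ren, <- H by (apply env_scons; auto). apply sat_ext. intros n.
  eo n; [destruct k0|]; unfold scons; cbv beta iota; ilvs; try reflexivity.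
  all: try (change 1 with (2*0+1); ilvs; reflexivity).
  all: rewrite ?Nat.add_1_r; cbv beta iota; ilvs; reflexivity.
Qed.

Lemma Def_ren Q (s : nat -> nat) : Def Q -> Def (fun e => Q (fun n => e (s n))).
Proof.
  intros [f [c [Hc H]]].
  exists (ren (ilvf (fun k => 2*(s k)) (fun k => 2*k+1)) f), c.
  split; auto. intros e He.
  rewrite sat_ren, <- H by (intros n; apply He). apply sat_ext. intros n.
  eo n; reflexivity.
Qed.

Lemma Def_not Q : Def Q -> Def (fun e => ~ Q e).
Proof. intros H. apply Def_imp; auto. apply Def_bot. Qed.
Lemma Def_and Q1 Q2 : Def Q1 -> Def Q2 -> Def (fun e => Q1 e /\ Q2 e).
Proof.
  intros H1 H2. eapply Def_ext; [|apply Def_not, Def_imp; [exact H1|apply Def_not; exact H2]].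
  intros e _. simpl. tauto.
Qed.
Lemma Def_or Q1 Q2 : Def Q1 -> Def Q2 -> Def (fun e => Q1 e \/ Q2 e).
Proof.
  intros H1 H2. eapply Def_ext; [|apply Def_imp; [apply Def_not; exact H1|exact H2]].
  intros e _. simpl. tauto.
Qed.
Lemma Def_iff Q1 Q2 : Def Q1 -> Def Q2 -> Def (fun e => Q1 e <-> Q2 e).
Proof.
  intros H1 H2. apply Def_and; apply Def_imp; auto.
Qed.
Lemma Def_True : Def (fun e => True).
Proof. eapply Def_ext; [|apply Def_not, Def_bot]. intros; simpl; tauto. Qed.
Lemma Def_exb Q : Def Q -> Def (fun e => exists x, D x /\ Q (scons x e)).
Proof.
  intros H. eapply Def_ext; [|apply Def_not, Def_allb, Def_not, H].
  intros e _. simpl. split.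
  - intros H1. apply NNPP. intros H2. apply H1. intros x Hx HQ. apply H2. eauto.
  - intros [x [Hx HQ]] H1. eapply H1; eauto.
Qed.
Lemma Def_all (A : U -> (nat -> U) -> Prop) :
  Def (fun e => A (e 0) (fun n => e (S n))) -> Def (fun e => forall x, D x -> A x e).
Proof. intros H. apply Def_allb in H. exact H. Qed.
Lemma Def_ex (A : U -> (nat -> U) -> Prop) :
  Def (fun e => A (e 0) (fun n => e (S n))) -> Def (fun e => exists x, D x /\ A x e).
Proof. intros H. apply Def_exb in H. exact H. Qed.

Lemma Def_memc i k : D k -> Def (fun e => mem (e i) k).
Proof. intros Hk. exact (Def_const (fun e => mem (e (S i)) (e 0)) k (Def_mem _ _) Hk). Qed.
Lemma Def_cmem k i : D k -> Def (fun e => mem k (e i)).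
Proof. intros Hk. exact (Def_const (fun e => mem (e 0) (e (S i))) k (Def_mem _ _) Hk). Qed.
Lemma Def_eqc i k : D k -> Def (fun e => e i = k).
Proof. intros Hk. exact (Def_const (fun e => e (S i) = e 0) k (Def_eq _ _) Hk). Qed.


Ltac dhook := fail.
Ltac dtac := repeat (cbv beta; first
  [ dhook | apply Def_all | apply Def_ex | apply Def_and | apply Def_or | apply Def_iff
  | apply Def_not | apply Def_imp | apply Def_mem | apply Def_eq | apply Def_ur
  | apply Def_True | apply Def_bot
  | (apply Def_memc; assumption) | (apply Def_cmem; assumption) | (apply Def_eqc; assumption) ]).

Lemma Hm_ur : ~ ur m. Proof. apply Hm. Qed.
Lemma trD x y : D x -> mem y x -> D y.
Proof. intros Hx Hy. destruct Hm as [_ [Ht _]]. exact (Ht x y Hx Hy). Qed.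
Lemma MZ : models_ZFU_R mem ur D. Proof. apply Hm. Qed.

Lemma extA x y : ~ ur x -> ~ ur y -> (forall z, mem z x <-> mem z y) -> x = y.
Proof. apply (amb_ext _ _ HV). Qed.

Lemma ur_nomem a x : ur a -> ~ mem x a.
Proof. intros H. apply (amb_A _ _ HV); auto. Qed.

Lemma sepA (q : U -> Prop) x : Def (fun e => q (e 0)) -> D x ->
  exists y, D y /\ ~ ur y /\ forall z, mem z y <-> (mem z x /\ q z).
Proof.
  intros [f [c [Hc Hf]]] Hx.
  destruct (m_sep _ _ _ MZ (ren (ilvf (fun _ => 0) (fun k => S k)) f) c Hc x Hx)
    as [y [Hy [Hyu Hyz]]].
  exists y. split; auto. split; auto. intros z.
  assert (Hz : forall z, D z -> (mem z y <-> mem z x /\ q z)).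
  { intros z0 Hz0. rewrite Hyz by auto. rewrite sat_ren.
    rewrite (sat_ext _ _ _ f _ (ilv (fun _ => z0) c)).
    rewrite Hf by (intros n; auto). tauto.
    intros n. eo n; reflexivity. }
  split; intros H.
  - assert (Dz : D z) by (eapply trD; [exact Hy|exact H]). exact (proj1 (Hz z Dz) H).
  - assert (Dz : D z) by (eapply trD; [exact Hx|apply H]). exact (proj2 (Hz z Dz) H).
Qed.

Lemma replA (q : U -> U -> Prop) a : Def (fun e => q (e 0) (e 1)) -> D a ->
  (forall x, D x -> mem x a -> exists y, D y /\ q x y /\ forall y', D y' -> q x y' -> y' = y) ->
  exists b, D b /\ ~ ur b /\ forall x, mem x a -> exists y, mem y b /\ q x y.
Proof.
  intros [f [c [Hc Hf]]] Ha H.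
  set (f' := ren (ilvf (fun k => match k with 0 => 1 | _ => 0 end) (fun k => S (S k))) f).
  assert (Hs : forall x y, D x -> D y -> (SAT (scons y (scons x c)) f' <-> q x y)).
  { intros x y Hx Hy. unfold f'. rewrite sat_ren.
    rewrite (sat_ext _ _ _ f _ (ilv (fun k => match k with 0 => x | _ => y end) c)).
    rewrite Hf. reflexivity. intros [|n]; auto.
    intros n. eo n; [destruct k|]; reflexivity. }
  destruct (m_repl _ _ _ MZ f' c Hc a Ha) as [b [Hb [Hbu Hbb]]].
  { intros x Hx Hxa. destruct (H x Hx Hxa) as [y [Hy [Hq Hu]]].
    exists y. split; auto. split. apply Hs; auto.
    intros y' Hy' Hs'. apply Hu; auto. apply Hs; auto. }
  exists b. split; auto. split; auto. intros x Hxa.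
  assert (Hx : D x) by exact (trD a x Ha Hxa).
  destruct (Hbb x Hx Hxa) as [y [Hy [Hyb Hsy]]]. exists y. split; auto. apply Hs; auto.
Qed.

Lemma unionA F : D F -> exists A, D A /\ forall Y x, mem x Y -> mem Y F -> mem x A.
Proof.
  intros HF. destruct (m_union _ _ _ MZ F HF) as [A [HA [_ H]]].
  exists A. split; auto. intros Y x H1 H2.
  assert (DY : D Y) by exact (trD F Y HF H2).
  apply (H Y x); auto. exact (trD Y x DY H1).
Qed.

Lemma powA x : D x -> exists y, D y /\
  forall z, D z -> ~ ur z -> (forall w, mem w z -> mem w x) -> mem z y.
Proof.
  intros Hx. destruct (m_power _ _ _ MZ x Hx) as [y [Hy [_ H]]].
  exists y. split; auto.
Qed.

Lemma singD a : D a -> exists s, D s /\ ~ ur s /\ forall u, mem u s <-> u = a.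
Proof.
  intros Ha. destruct (m_pair _ _ _ MZ a a Ha Ha) as [z [Hz [_ [Haz _]]]].
  destruct (sepA (fun u => u = a) z) as [s [Hs [Hsu Hss]]]; auto.
  { dtac. }
  exists s. split; auto. split; auto. intros u. rewrite Hss. split; [tauto|].
  intros ->. auto.
Qed.

Lemma dblD a b : D a -> D b -> exists s, D s /\ ~ ur s /\ forall u, mem u s <-> (u = a \/ u = b).
Proof.
  intros Ha Hb. destruct (m_pair _ _ _ MZ a b Ha Hb) as [z [Hz [_ [Haz Hbz]]]].
  destruct (sepA (fun u => u = a \/ u = b) z) as [s [Hs [Hsu Hss]]]; auto.
  { dtac. }
  exists s. split; auto. split; auto. intros u. rewrite Hss. split; [tauto|].
  intros [-> | ->]; auto.
Qed.

Lemma unionD2 A B : D A -> D B -> exists X, D X /\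
  (forall x, mem x A -> mem x X) /\ (forall x, mem x B -> mem x X).
Proof.
  intros HA HB. destruct (dblD A B HA HB) as [s [Hs [_ Hss]]].
  destruct (unionA s Hs) as [X [HX H]]. exists X. split; auto.
  split; intros x Hx; eapply H; eauto; apply Hss; auto.
Qed.

Lemma sing_amb a : exists s, ~ ur s /\ forall u, mem u s <-> u = a.
Proof.
  destruct (amb_pair _ _ HV a a) as [s [Hs H]]. exists s. split; auto.
  intros u. rewrite H. tauto.
Qed.
Lemma dbl_amb a b : exists s, ~ ur s /\ forall u, mem u s <-> (u = a \/ u = b).
Proof. apply (amb_pair _ _ HV). Qed.

Lemma pair_memb z a b : is_pair mem ur z a b ->
  exists s1 s2, mem s1 z /\ mem a s1 /\ mem s2 z /\ mem b s2 /\ mem a s2.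
Proof.
  intros [Hz H]. destruct (sing_amb a) as [s1 [Hs1 H1]]. destruct (dbl_amb a b) as [s2 [Hs2 H2]].
  exists s1, s2. split. apply H. left. split; auto.
  split. apply H1; auto. split. apply H. right. split; auto.
  split; apply H2; auto.
Qed.

Lemma pair_D z a b : D z -> is_pair mem ur z a b -> D a /\ D b.
Proof.
  intros Hz Hp. destruct (pair_memb z a b Hp) as [s1 [s2 [H1 [H2 [H3 [H4 _]]]]]].
  split; eapply trD; [|eauto| |eauto]; eapply trD; eauto.
Qed.

Lemma pair_in_D t a b : D t -> pair_in mem ur t a b -> D a /\ D b.
Proof. intros Ht [z [Hz Hp]]. exact (pair_D z a b (trD t z Ht Hz) Hp). Qed.

Lemma pair_nur z a b : is_pair mem ur z a b -> ~ ur z.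
Proof. intros [H _]; auto. Qed.

Lemma pair_inj z a b a' b' : is_pair mem ur z a b -> is_pair mem ur z a' b' -> a = a' /\ b = b'.
Proof.
  intros H1 H2. destruct (sing_amb a) as [s1 [Hs1 Hs1m]].
  destruct (dbl_amb a b) as [s2 [Hs2 Hs2m]].
  destruct (dbl_amb a' b') as [s3 [Hs3 Hs3m]].
  assert (M1 : mem s1 z) by (apply H1; left; auto).
  assert (M2 : mem s2 z) by (apply H1; right; auto).
  assert (M3 : mem s3 z) by (apply H2; right; auto).
  assert (Eaa : a = a').
  { apply H2 in M1. destruct M1 as [[_ H]|[_ H]].
    - apply H, Hs1m; auto.
    - symmetry. apply Hs1m, H. auto. }
  subst a'. split; auto.
  apply H2 in M2. destruct M2 as [[_ H]|[_ H]].
  - assert (b = a) by (apply H, Hs2m; auto). subst b.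
    apply H1 in M3. destruct M3 as [[_ H']|[_ H']].
    + symmetry. apply H', Hs3m. auto.
    + assert (Hb' : b' = a \/ b' = a) by (apply H', Hs3m; auto). destruct Hb'; auto.
  - assert (Hb : b = a \/ b = b') by (apply H, Hs2m; auto). destruct Hb as [Hb|Hb]; auto.
    subst b. apply H1 in M3. destruct M3 as [[_ H']|[_ H']].
    + symmetry. apply H', Hs3m. auto.
    + assert (Hb' : b' = a \/ b' = a) by (apply H', Hs3m; auto). destruct Hb'; auto.
Qed.

Lemma pair_uniq z z' a b : is_pair mem ur z a b -> is_pair mem ur z' a b -> z = z'.
Proof.
  intros [Hz H] [Hz' H']. apply extA; auto. intros w. rewrite H, H'. tauto.
Qed.

Lemma pair_ex a b : D a -> D b -> exists z, D z /\ is_pair mem ur z a b.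
Proof.
  intros Ha Hb. destruct (singD a Ha) as [s1 [Hs1 [Hs1u Hs1m]]].
  destruct (dblD a b Ha Hb) as [s2 [Hs2 [Hs2u Hs2m]]].
  destruct (dblD s1 s2 Hs1 Hs2) as [z [Hz [Hzu Hzm]]].
  exists z. split; auto. split; auto. intros w. rewrite Hzm. split.
  - intros [->| ->]; [left|right]; split; auto.
  - intros [[Hw H]|[Hw H]]; [left|right]; apply extA; auto; intros u;
      rewrite ?H, ?Hs1m, ?Hs2m; tauto.
Qed.

Lemma Def_pair0 : Def (fun e => is_pair mem ur (e 0) (e 1) (e 2)).
Proof.
  eapply Def_ext; cycle 1.
  { instantiate (1 := fun e => ~ ur (e 0) /\ forall w, D w -> (mem w (e 0) <->
      ((~ ur w /\ forall u, D u -> (mem u w <-> u = e 1)) \/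
       (~ ur w /\ forall u, D u -> (mem u w <-> u = e 1 \/ u = e 2))))).
    dtac. }
  intros e He. cbv beta. unfold is_pair. split.
  - intros [Hz H]. split; auto. intros w. split.
    + intros Hw. assert (Dw : D w) by (eapply trD; [apply He|eauto]).
      apply H in Hw; auto. destruct Hw as [[Hwu H1]|[Hwu H1]]; [left|right]; split; auto;
      intros u; split; intros Hu.
      * apply H1; auto. eapply trD; eauto.
      * apply H1; auto. subst; apply He.
      * apply H1; auto. eapply trD; eauto.
      * apply H1; auto. destruct Hu; subst; apply He.
    + intros Hw. assert (exists w', D w' /\ w' = w).
      { destruct Hw as [[Hwu H1]|[Hwu H1]].
        - destruct (singD (e 1) (He 1)) as [s [Hs [Hsu Hsm]]]. exists s. split; auto.
          apply extA; auto. intros u. rewrite Hsm, H1. tauto.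
        - destruct (dblD (e 1) (e 2) (He 1) (He 2)) as [s [Hs [Hsu Hsm]]]. exists s. split; auto.
          apply extA; auto. intros u. rewrite Hsm, H1. tauto. }
      destruct H0 as [w' [Hw' <-]]. apply H; auto.
      destruct Hw as [[Hwu H1]|[Hwu H1]]; [left|right]; split; auto; intros u Hu; apply H1.
  - intros [Hz H]. split; auto. intros w Hw. rewrite H. split.
    + intros [[Hwu H1]|[Hwu H1]]; [left|right]; split; auto; intros u Hu; exact (H1 u).
    + intros [[Hwu H1]|[Hwu H1]]; [left|right]; split; auto; intros u; split; intros Hu.
      * exact (proj1 (H1 u (trD w u Hw Hu)) Hu).
      * subst u. exact (proj2 (H1 _ (He 1)) eq_refl).
      * exact (proj1 (H1 u (trD w u Hw Hu)) Hu).
      * destruct Hu as [Hu|Hu]; subst u; [exact (proj2 (H1 _ (He 1)) (or_introl eq_refl))|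
          exact (proj2 (H1 _ (He 2)) (or_intror eq_refl))].
Qed.

Lemma Def_pair i j k : Def (fun e => is_pair mem ur (e i) (e j) (e k)).
Proof. exact (Def_ren _ (fun n => match n with 0 => i | 1 => j | _ => k end) Def_pair0). Qed.

Lemma Def_pairin0 : Def (fun e => pair_in mem ur (e 0) (e 1) (e 2)).
Proof.
  eapply Def_ext; cycle 1.
  { instantiate (1 := fun e => exists z, D z /\ mem z (e 0) /\ is_pair mem ur z (e 1) (e 2)).
    apply Def_ex. cbv beta. apply Def_and. apply Def_mem. apply Def_pair. }
  intros e He. unfold pair_in. split.
  - intros [z [_ H]]. exists z. exact H.
  - intros [z [Hz Hp]]. exists z. split; auto. exact (trD _ z (He 0) Hz).
Qed.
Lemma Def_pairin i j k : Def (fun e => pair_in mem ur (e i) (e j) (e k)).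
Proof. exact (Def_ren _ (fun n => match n with 0 => i | 1 => j | _ => k end) Def_pairin0). Qed.

Lemma pair_in_mono S T a b : pair_in mem ur T a b -> (forall z, mem z T -> mem z S) ->
  pair_in mem ur S a b.
Proof. intros [z [Hz Hp]] H. exists z. auto. Qed.

Lemma wf_irrefl (R : U -> U -> Prop) : well_founded R -> forall x, ~ R x x.
Proof.
  intros Hwf x. induction x as [x IH] using (well_founded_ind Hwf). intros H. exact (IH x H H).
Qed.

Section Rec.
Variable R : U -> U -> Prop.
Variable Step : U -> U -> U -> Prop.

Definition Good u S := forall w, R w u -> exists v, pair_in mem ur S w v.
Definition FunOn u S S' := forall w y y', R w u -> pair_in mem ur S w y ->
  pair_in mem ur S' w y' -> y = y'.
Definition Cert S := forall z, mem z S -> exists u v, is_pair mem ur z u v /\ Good u S /\ Step u S v.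
Definition MinCert w T := D T /\ Cert T /\ (exists v, pair_in mem ur T w v) /\
  forall S, D S -> Cert S -> (exists v, pair_in mem ur S w v) -> forall z, mem z T -> mem z S.

Hypothesis HRdef : Def (fun e => R (e 0) (e 1)).
Hypothesis HSdef : Def (fun e => Step (e 0) (e 1) (e 2)).
Hypothesis Rwf : well_founded R.
Hypothesis RD : forall w u, R w u -> D u -> D w.
Hypothesis Rbound : forall u, D u -> exists c, D c /\ forall w, R w u -> mem w c.
Hypothesis Sdet : forall u S S' v v', D u -> D S -> D S' -> D v -> D v' ->
  Good u S -> Good u S' -> FunOn u S S' -> Step u S v -> Step u S' v' -> v = v'.
Hypothesis Sex : forall u S, D u -> D S -> Good u S -> FunOn u S S ->
  exists v, D v /\ Step u S v.

Lemma Def_R i j : Def (fun e => R (e i) (e j)).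
Proof. exact (Def_ren _ (fun n => match n with 0 => i | _ => j end) HRdef). Qed.
Lemma Def_Step i j k : Def (fun e => Step (e i) (e j) (e k)).
Proof. exact (Def_ren _ (fun n => match n with 0 => i | 1 => j | _ => k end) HSdef). Qed.

Ltac dhook ::= first [apply Def_pair | apply Def_pairin | apply Def_R | apply Def_Step].
Ltac dtacR := dtac.

Lemma Def_Good0 : Def (fun e => Good (e 0) (e 1)).
Proof.
  eapply Def_ext; cycle 1.
  { instantiate (1 := fun e => forall w, D w -> R w (e 0) -> exists v, D v /\ pair_in mem ur (e 1) w v).
    dtacR. }
  intros e He. unfold Good. split.
  - intros H w Hw. destruct (H w (RD _ _ Hw (He 0)) Hw) as [v [_ Hv]]. eauto.
  - intros H w _ Hw. destruct (H w Hw) as [v Hv]. exists v. split; auto.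
    exact (proj2 (pair_in_D _ _ _ (He 1) Hv)).
Qed.
Lemma Def_Good i j : Def (fun e => Good (e i) (e j)).
Proof. exact (Def_ren _ (fun n => match n with 0 => i | _ => j end) Def_Good0). Qed.
Ltac dhook ::= first [apply Def_pair | apply Def_pairin | apply Def_R | apply Def_Step | apply Def_Good].

Lemma Def_Cert0 : Def (fun e => Cert (e 0)).
Proof.
  eapply Def_ext; cycle 1.
  { instantiate (1 := fun e => forall z, D z -> mem z (e 0) -> exists u, D u /\ exists v, D v /\
       is_pair mem ur z u v /\ Good u (e 0) /\ Step u (e 0) v).
    dtacR. }
  intros e He. unfold Cert. split.
  - intros H z Hz. destruct (H z (trD _ _ (He 0) Hz) Hz) as [u [_ [v [_ Hv]]]]. eauto.
  - intros H z _ Hz. destruct (H z Hz) as [u [v [Hp Hv]]].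
    destruct (pair_D z u v (trD _ _ (He 0) Hz) Hp). exists u. split; auto. exists v. auto.
Qed.
Lemma Def_Cert i : Def (fun e => Cert (e i)).
Proof. exact (Def_ren _ (fun n => i) Def_Cert0). Qed.
Ltac dhook ::= first [apply Def_pair | apply Def_pairin | apply Def_R | apply Def_Step | apply Def_Good
  | apply Def_Cert].

Lemma Def_MinCert0 : Def (fun e => MinCert (e 0) (e 1)).
Proof.
  eapply Def_ext; cycle 1.
  { instantiate (1 := fun e => Cert (e 1) /\ (exists v, D v /\ pair_in mem ur (e 1) (e 0) v) /\
      forall S, D S -> Cert S -> (exists v, D v /\ pair_in mem ur S (e 0) v) ->
         forall z, D z -> mem z (e 1) -> mem z S).
    dtacR. }
  intros e He. unfold MinCert. split.
  - intros [H1 [[v [_ H2]] H3]]. split; [apply He|]. split; auto. split; eauto.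
    intros S HS HC [v' Hv'] z Hz. apply (H3 S HS HC); auto.
    exists v'. split; auto. exact (proj2 (pair_in_D _ _ _ HS Hv')).
    exact (trD _ _ (He 1) Hz).
  - intros [_ [H1 [[v H2] H3]]]. split; auto. split.
    exists v. split; auto. exact (proj2 (pair_in_D _ _ _ (He 1) H2)).
    intros S HS HC [v' [_ Hv']] z _ Hz. eapply H3; eauto.
Qed.

Lemma cert_uniq : forall u S S' v v', D S -> D S' -> Cert S -> Cert S' ->
  pair_in mem ur S u v -> pair_in mem ur S' u v' -> v = v'.
Proof.
  intros u. induction u as [u IH] using (well_founded_ind Rwf).
  intros S S' v v' HS HS' CS CS' H1 H2.
  pose proof H1 as [z [Hz Hp]]. pose proof H2 as [z' [Hz' Hp']].
  destruct (CS z Hz) as [u0 [v0 [Hp0 [G0 St0]]]].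
  destruct (pair_inj _ _ _ _ _ Hp Hp0) as [<- <-].
  destruct (CS' z' Hz') as [u1 [v1 [Hp1 [G1 St1]]]].
  destruct (pair_inj _ _ _ _ _ Hp' Hp1) as [<- <-].
  destruct (pair_in_D _ _ _ HS H1) as [Du Dv].
  destruct (pair_in_D _ _ _ HS' H2) as [_ Dv'].
  apply (Sdet u S S' v v'); auto.
  intros w y y' Hw Hy Hy'. exact (IH w Hw S S' y y' HS HS' CS CS' Hy Hy').
Qed.

Lemma cert_union S : D S ->
  (forall z, mem z S -> exists T, D T /\ Cert T /\ mem z T /\ forall z', mem z' T -> mem z' S) ->
  Cert S.
Proof.
  intros HS H z Hz. destruct (H z Hz) as [T [HT [CT [HzT HTS]]]].
  destruct (CT z HzT) as [u [v [Hp [G St]]]]. exists u, v. split; auto.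
  assert (GS : Good u S) by (intros w Hw; destruct (G w Hw) as [y Hy];
    exists y; eapply pair_in_mono; eauto).
  split; auto.
  assert (Hin : forall w y, pair_in mem ur S w y -> exists T', D T' /\ Cert T' /\
      pair_in mem ur T' w y).
  { intros w y [z1 [Hz1 Hp1]]. destruct (H z1 Hz1) as [T' [HT' [CT' [Hz1T' _]]]].
    exists T'. split; auto. split; auto. exists z1; auto. }
  assert (Du : D u /\ D v) by (apply (pair_D z); auto; exact (trD _ _ HT HzT)).
  destruct Du as [Du Dv].
  assert (FS : FunOn u S S).
  { intros w y y' _ Hy Hy'. destruct (Hin w y Hy) as [T1 [H1 [C1 P1]]].
    destruct (Hin w y' Hy') as [T2 [H2 [C2 P2]]]. exact (cert_uniq w T1 T2 y y' H1 H2 C1 C2 P1 P2). }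
  destruct (Sex u S Du HS GS FS) as [v' [Dv' St']].
  replace v with v'; auto.
  apply (Sdet u S T v' v); auto.
  intros w y y' _ Hy Hy'. destruct (Hin w y Hy) as [T1 [H1 [C1 P1]]].
  exact (cert_uniq w T1 T y y' H1 HT C1 CT P1 Hy').
Qed.

Lemma mincert_uniq w T T' : MinCert w T -> MinCert w T' -> T = T'.
Proof.
  intros [HT [CT [[v Hv] MT]]] [HT' [CT' [[v' Hv'] MT']]].
  pose proof Hv as [z [Hz _]]. pose proof Hv' as [z' [Hz' _]].
  apply extA.
  - intros Hu. exact (ur_nomem _ _ Hu Hz).
  - intros Hu. exact (ur_nomem _ _ Hu Hz').
  - intros y. split; intros Hy.
    + exact (MT T' HT' CT' (ex_intro _ v' Hv') y Hy).
    + exact (MT' T HT CT (ex_intro _ v Hv) y Hy).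
Qed.

Lemma mincert_ex w : D w -> (exists S, D S /\ Cert S /\ exists v, pair_in mem ur S w v) ->
  exists T, MinCert w T.
Proof.
  intros Hw [S0 [HS0 [C0 [v0 Hv0]]]].
  destruct (sepA (fun z => forall S, D S -> Cert S -> (exists v, D v /\ pair_in mem ur S w v) ->
     mem z S) S0) as [T [HT [HTu HTm]]]; auto.
  { apply (Def_const (fun e => forall S, D S -> Cert S -> (exists v, D v /\ pair_in mem ur S (e 0) v)
     -> mem (e 1) S) w); auto.
    dtacR. }
  assert (TS0 : forall z, mem z T -> mem z S0) by (intros z Hz; exact (proj1 (proj1 (HTm z) Hz))).
  assert (C : forall u y z', is_pair mem ur z' u y -> mem z' S0 ->
     (forall S, D S -> Cert S -> (exists v, pair_in mem ur S w v) -> exists y'', pair_in mem ur S u y'') ->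
     mem z' T).
  { intros u y z' Hp Hz' HS. apply HTm. split; auto.
    intros S DS CS [v [_ Hv]]. destruct (HS S DS CS (ex_intro _ v Hv)) as [y'' Hy''].
    assert (Hyy : y = y'') by exact (cert_uniq u S0 S y y'' HS0 DS C0 CS (ex_intro _ z' (conj Hz' Hp)) Hy'').
    subst y''. destruct Hy'' as [z'' [Hz'' Hp'']]. rewrite (pair_uniq _ _ _ _ Hp Hp''). exact Hz''. }
  assert (CT : Cert T).
  { intros z Hz. pose proof (TS0 z Hz) as Hz0.
    destruct (C0 z Hz0) as [u [v [Hp [G St]]]]. exists u, v. split; auto.
    assert (GT : Good u T).
    { intros w' Hw'. destruct (G w' Hw') as [y [z' [Hz' Hp']]]. exists y. exists z'. split; auto.
      apply (C w' y z' Hp' Hz'). intros S DS CS HSw.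
      assert (HzS : mem z S) by (apply HTm in Hz; apply (proj2 Hz); auto;
        destruct HSw as [vv Hvv]; exists vv; split; auto; exact (proj2 (pair_in_D _ _ _ DS Hvv))).
      destruct (CS z HzS) as [u0 [v1 [Hp0 [G0 _]]]].
      destruct (pair_inj _ _ _ _ _ Hp Hp0) as [<- _]. exact (G0 w' Hw'). }
    split; auto.
    assert (FT : forall u0, FunOn u0 T S0).
    { intros u0 w' y y' _ Hy Hy'. apply (cert_uniq w' S0 S0 y y' HS0 HS0 C0 C0); auto.
      eapply pair_in_mono; eauto. }
    assert (FTT : FunOn u T T).
    { intros w' y y' _ Hy Hy'. apply (cert_uniq w' S0 S0 y y' HS0 HS0 C0 C0);
      eapply pair_in_mono; eauto. }
    destruct (pair_D z u v (trD _ _ HS0 Hz0) Hp) as [Du Dv].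
    destruct (Sex u T Du HT GT FTT) as [v' [Dv' St']].
    replace v with v'; auto.
    apply (Sdet u T S0 v' v); auto. }
  exists T. split; auto. split; auto. split.
  - exists v0. destruct Hv0 as [z0 [Hz0 Hp0]]. exists z0. split; auto.
    apply (C w v0 z0 Hp0 Hz0). intros S _ _ H; exact H.
  - intros S DS CS [vv Hvv] z Hz. apply HTm in Hz. apply (proj2 Hz); auto.
    exists vv. split; auto. exact (proj2 (pair_in_D _ _ _ DS Hvv)).
Qed.

Lemma Def_MinCert i j : Def (fun e => MinCert (e i) (e j)).
Proof. exact (Def_ren _ (fun n => match n with 0 => i | _ => j end) Def_MinCert0). Qed.
Ltac dhook ::= first [apply Def_pair | apply Def_pairin | apply Def_R | apply Def_Step | apply Def_Good
  | apply Def_Cert | apply Def_MinCert].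

Lemma rec_total : forall x, D x -> exists S, D S /\ Cert S /\ exists v, pair_in mem ur S x v.
Proof.
  intros x. induction x as [x IH] using (well_founded_ind Rwf). intros Hx.
  destruct (Rbound x Hx) as [c [Hc Hcb]].
  assert (Hmc : forall w, R w x -> exists T, MinCert w T).
  { intros w Hw. apply mincert_ex. exact (RD _ _ Hw Hx). apply IH; auto. exact (RD _ _ Hw Hx). }
  destruct (replA (fun w T => (R w x /\ MinCert w T) \/ (~ R w x /\ T = w)) c) as [b [Hb [_ Hbm]]].
  { apply (Def_const (fun e => (R (e 1) (e 0) /\ MinCert (e 1) (e 2)) \/ (~ R (e 1) (e 0) /\ e 2 = e 1)) x); auto.
    dtac. }
  { exact Hc. }
  { intros w Dw Hwc. cbv beta. destruct (classic (R w x)) as [Hr|Hr].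
    - destruct (Hmc w Hr) as [T HT]. exists T. split; [exact (proj1 HT)|]. split; [left; auto|].
      intros T' _ [[_ HT']|[Hn _]]; [exact (mincert_uniq w T' T HT' HT)| contradiction].
    - exists w. split; auto. split; [right; auto|]. intros T' _ [[Hr' _]|[_ ->]]; [contradiction|reflexivity]. }
  destruct (unionA b Hb) as [U0 [HU0 HU0m]]. cbv beta in Hbm.
  assert (InU0 : forall w T z, R w x -> MinCert w T -> mem z T -> mem z U0).
  { intros w T z Hr HT Hz. destruct (Hbm w (Hcb w Hr)) as [T' [HT'b [[_ HT']|[Hn _]]]]; [|contradiction].
    rewrite (mincert_uniq w T' T HT' HT) in HT'b. exact (HU0m T z Hz HT'b). }
  destruct (sepA (fun z => exists w, D w /\ exists T, D T /\ R w x /\ MinCert w T /\ mem z T) U0)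
    as [S1 [HS1 [_ HS1m]]].
  { apply (Def_const (fun e => exists w, D w /\ exists T, D T /\ R w (e 0) /\ MinCert w T /\ mem (e 1) T) x); auto.
    dtac. }
  { exact HU0. }
  assert (S1m : forall z, mem z S1 <-> exists w T, R w x /\ MinCert w T /\ mem z T).
  { intros z. rewrite HS1m. split.
    - intros [_ [w [_ [T [_ H]]]]]. eauto.
    - intros [w [T [Hr [HT Hz]]]]. split. eapply InU0; eauto.
      exists w. split. exact (RD _ _ Hr Hx). exists T. split. exact (proj1 HT). auto. }
  assert (C1 : Cert S1).
  { apply cert_union; auto. intros z Hz. apply S1m in Hz. destruct Hz as [w [T [Hr [HT Hz]]]].
    exists T. split; [exact (proj1 HT)|]. split; [exact (proj1 (proj2 HT))|]. split; auto. intros z' Hz'. apply S1m. eauto. }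
  destruct (classic (exists v, pair_in mem ur S1 x v)) as [Hin|Hnin].
  { exists S1. auto. }
  assert (NotIn : forall u v, pair_in mem ur S1 u v -> ~ R x u).
  { intros u v [z [Hz Hp]] Hr. destruct (C1 z Hz) as [u0 [v0 [Hp0 [G0 _]]]].
    destruct (pair_inj _ _ _ _ _ Hp Hp0) as [<- _]. apply Hnin. exact (G0 x Hr). }
  assert (G1 : Good x S1).
  { intros w Hr. destruct (Hmc w Hr) as [T HT]. pose proof HT as [_ [_ [[v Hv] _]]].
    exists v. eapply pair_in_mono; [exact Hv|]. intros z Hz. apply S1m. eauto. }
  assert (F1 : FunOn x S1 S1)
    by (intros w y y' _ Hy Hy'; exact (cert_uniq w S1 S1 y y' HS1 HS1 C1 C1 Hy Hy')).
  destruct (Sex x S1 Hx HS1 G1 F1) as [v [Dv Stv]].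
  destruct (pair_ex x v Hx Dv) as [z0 [Dz0 Hz0]].
  destruct (singD z0 Dz0) as [s [Ds [_ Hsm]]].
  destruct (dblD S1 s HS1 Ds) as [d [Dd [_ Hdm]]].
  destruct (unionA d Dd) as [U2 [DU2 HU2]].
  destruct (sepA (fun y => mem y S1 \/ y = z0) U2) as [S2 [DS2 [_ HS2m]]].
  { dtac. }
  { exact DU2. }
  assert (S2m : forall y, mem y S2 <-> mem y S1 \/ y = z0).
  { intros y. rewrite HS2m. split; [tauto|]. intros H. split; auto. destruct H as [H| ->].
    - apply (HU2 S1 y H). apply Hdm; auto.
    - apply (HU2 s z0). apply Hsm; auto. apply Hdm; auto. }
  assert (P2 : forall w y, pair_in mem ur S2 w y -> pair_in mem ur S1 w y \/ (w = x /\ y = v)).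
  { intros w y [z [Hz Hp]]. apply S2m in Hz. destruct Hz as [Hz| ->].
    left; exists z; auto. right. destruct (pair_inj _ _ _ _ _ Hp Hz0) as [-> ->]; auto. }
  assert (S12 : forall z, mem z S1 -> mem z S2) by (intros z Hz; apply S2m; auto).
  assert (Hirr : ~ R x x) by exact (wf_irrefl R Rwf x).
  assert (C2 : Cert S2).
  { intros z Hz. apply S2m in Hz. destruct Hz as [Hz| ->].
    - destruct (C1 z Hz) as [u [v0 [Hp [G St]]]]. exists u, v0. split; auto.
      assert (Hnu : ~ R x u) by (apply (NotIn u v0); exists z; auto).
      assert (G2 : Good u S2)
        by (intros w Hw; destruct (G w Hw) as [y Hy]; exists y; eapply pair_in_mono; eauto).
      split; auto.
      assert (F22 : FunOn u S2 S2).
      { intros w y y' Hw Hy Hy'. destruct (P2 _ _ Hy) as [Hy1|[-> _]]; [|contradiction].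
        destruct (P2 _ _ Hy') as [Hy1'|[-> _]]; [|contradiction].
        exact (cert_uniq w S1 S1 y y' HS1 HS1 C1 C1 Hy1 Hy1'). }
      assert (F21 : FunOn u S2 S1).
      { intros w y y' Hw Hy Hy'. destruct (P2 _ _ Hy) as [Hy1|[-> _]]; [|contradiction].
        exact (cert_uniq w S1 S1 y y' HS1 HS1 C1 C1 Hy1 Hy'). }
      destruct (pair_D z u v0 (trD _ _ HS1 Hz) Hp) as [Du Dv0].
      destruct (Sex u S2 Du DS2 G2 F22) as [v' [Dv' St']]. replace v0 with v'; auto.
      apply (Sdet u S2 S1 v' v0); auto.
    - exists x, v. split; auto.
      assert (G2 : Good x S2)
        by (intros w Hw; destruct (G1 w Hw) as [y Hy]; exists y; eapply pair_in_mono; eauto).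
      split; auto.
      assert (F22 : FunOn x S2 S2).
      { intros w y y' Hw Hy Hy'. destruct (P2 _ _ Hy) as [Hy1|[-> _]]; [|contradiction].
        destruct (P2 _ _ Hy') as [Hy1'|[-> _]]; [|contradiction].
        exact (cert_uniq w S1 S1 y y' HS1 HS1 C1 C1 Hy1 Hy1'). }
      assert (F21 : FunOn x S2 S1).
      { intros w y y' Hw Hy Hy'. destruct (P2 _ _ Hy) as [Hy1|[-> _]]; [|contradiction].
        exact (cert_uniq w S1 S1 y y' HS1 HS1 C1 C1 Hy1 Hy'). }
      destruct (Sex x S2 Hx DS2 G2 F22) as [v' [Dv' St']]. replace v with v'; auto.
      apply (Sdet x S2 S1 v' v); auto. }
  exists S2. split; auto. split; auto. exists v. exists z0. split; auto. apply S2m; auto.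
Qed.

Lemma rec_props S x v : D S -> Cert S -> pair_in mem ur S x v ->
  D x /\ D v /\ Good x S /\ Step x S v /\ FunOn x S S.
Proof.
  intros DS CS Hin. pose proof Hin as [z [Hz Hp]].
  destruct (CS z Hz) as [u [v0 [Hp0 [G St]]]]. destruct (pair_inj _ _ _ _ _ Hp Hp0) as [<- <-].
  destruct (pair_in_D _ _ _ DS Hin). split; auto. split; auto. split; auto. split; auto.
  intros w y y' _ Hy Hy'. exact (cert_uniq w S S y y' DS DS CS CS Hy Hy').
Qed.

End Rec.

Lemma Def_pairc i j k : D k -> Def (fun e => is_pair mem ur (e i) (e j) k).
Proof. intros Hk. exact (Def_const (fun e => is_pair mem ur (e (S i)) (e (S j)) (e 0)) k (Def_pair _ _ _) Hk). Qed.
Lemma Def_pairin_c k i j : D k -> Def (fun e => pair_in mem ur k (e i) (e j)).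
Proof. intros Hk. exact (Def_const (fun e => pair_in mem ur (e 0) (e (S i)) (e (S j))) k (Def_pairin _ _ _) Hk). Qed.

Variables (P le one G : U).
Hypothesis HPm : mem P m.
Hypothesis Hlem : mem le m.
Hypothesis Honem : mem one m.
Hypothesis HP : forcing_poset mem ur P le one.
Hypothesis HG : generic mem ur P le one m G.

Lemma Def_leP i j : Def (fun e => leP mem ur le (e i) (e j)).
Proof. exact (Def_const (fun e => pair_in mem ur (e 0) (e (S i)) (e (S j))) le (Def_pairin _ _ _) Hlem). Qed.

Lemma P_D p : mem p P -> D p.
Proof. intros H. exact (trD P p HPm H). Qed.

Lemma Def_compat i j : Def (fun e => compatible mem ur P le (e i) (e j)).
Proof.
  eapply Def_ext; cycle 1.
  { instantiate (1 := fun e => exists r, D r /\ mem r P /\ leP mem ur le r (e i) /\ leP mem ur le r (e j)).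
    apply Def_ex. cbv beta. apply Def_and. apply Def_memc; exact HPm.
    apply Def_and; apply Def_leP. }
  intros e He. unfold compatible. split.
  - intros [r [_ H]]. exists r. exact H.
  - intros [r H]. exists r. split; auto. apply P_D, H.
Qed.

Ltac dhook ::= first [apply Def_pair | (apply Def_pairc; assumption) | apply Def_pairin
  | (apply Def_pairin_c; assumption) | apply Def_leP | apply Def_compat].

Definition Rch (w u : U) : Prop := exists p, pair_in mem ur u w p.

Lemma Def_Rch : Def (fun e => Rch (e 0) (e 1)).
Proof.
  eapply Def_ext; cycle 1.
  { instantiate (1 := fun e => exists p, D p /\ pair_in mem ur (e 1) (e 0) p). dtac. }
  intros e He. unfold Rch. split.
  - intros [p [_ H]]. eauto.
  - intros [p H]. exists p. split; auto. exact (proj2 (pair_in_D _ _ _ (He 1) H)).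
Qed.

Lemma Rch_wf : well_founded Rch.
Proof.
  apply (wf_incl _ _ (Relation_Operators.clos_trans U mem)).
  - intros w u [p [z [Hz Hp]]]. destruct (pair_memb z w p Hp) as [s1 [_ [H1 [H2 _]]]].
    apply Relation_Operators.t_trans with s1. apply Relation_Operators.t_step; auto.
    apply Relation_Operators.t_trans with z; apply Relation_Operators.t_step; auto.
  - apply wf_clos_trans. apply (amb_wf _ _ HV).
Qed.

Lemma Rch_D w u : Rch w u -> D u -> D w.
Proof. intros [p H] Hu. exact (proj1 (pair_in_D _ _ _ Hu H)). Qed.

Lemma union2 u : D u -> exists c, D c /\ forall z s x, mem z u -> mem s z -> mem x s -> mem x c.
Proof.
  intros Hu. destruct (unionA u Hu) as [A1 [HA1 H1]]. destruct (unionA A1 HA1) as [A2 [HA2 H2]].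
  exists A2. split; auto. intros z s x Hz Hs Hx. apply (H2 s x Hx). apply (H1 z s Hs Hz).
Qed.

Lemma pin_l t a b c : (forall z s x, mem z t -> mem s z -> mem x s -> mem x c) ->
  pair_in mem ur t a b -> mem a c.
Proof. intros H [z [Hz Hp]]. destruct (pair_memb z a b Hp) as [s1 [s2 [H1 [H2 _]]]]. eauto. Qed.
Lemma pin_r t a b c : (forall z s x, mem z t -> mem s z -> mem x s -> mem x c) ->
  pair_in mem ur t a b -> mem b c.
Proof. intros H [z [Hz Hp]]. destruct (pair_memb z a b Hp) as [s1 [s2 [_ [_ [H3 [H4 _]]]]]]. eauto. Qed.

Lemma Rch_bound u : D u -> exists c, D c /\ forall w, Rch w u -> mem w c.
Proof.
  intros Hu. destruct (union2 u Hu) as [c [Hc H]]. exists c. split; auto.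
  intros w [p Hp]. eapply pin_l; eauto.
Qed.

Lemma pow2 X : D X -> exists C, D C /\ forall z a b, D z -> is_pair mem ur z a b -> mem a X -> mem b X -> mem z C.
Proof.
  intros HX. destruct (powA X HX) as [Y1 [HY1 H1]]. destruct (powA Y1 HY1) as [C [HC H2]].
  exists C. split; auto. intros z a b Hz Hp Ha Hb. apply H2; auto. eapply pair_nur; eauto.
  intros w Hw. destruct Hp as [_ Hp]. pose proof Hw as Hw'. apply Hp in Hw'.
  assert (Dw : D w) by exact (trD z w Hz Hw).
  destruct Hw' as [[Hwu Hwm]|[Hwu Hwm]]; apply H1; auto; intros u Hu; apply Hwm in Hu;
  [subst; auto | destruct Hu; subst; auto].
Qed.

Lemma newname_nur x : new_name mem ur P le x -> ~ ur x.
Proof. intros H. inversion H; auto. Qed.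

Lemma filt : filter mem ur P le one G.
Proof. apply HG. Qed.
Lemma G_P p : mem p G -> mem p P.
Proof. intros H. apply filt; auto. Qed.
Lemma G_up p q : mem p G -> mem q P -> leP mem ur le p q -> mem q G.
Proof. intros H1 H2 H3. destruct filt as [_ [_ [H _]]]. eauto. Qed.
Lemma G_dir p q : mem p G -> mem q G -> exists r, mem r G /\ leP mem ur le r p /\ leP mem ur le r q.
Proof. intros H1 H2. destruct filt as [_ [_ [_ H]]]. eauto. Qed.
Lemma G_compat p q : mem p G -> mem q G -> compatible mem ur P le p q.
Proof. intros H1 H2. destruct (G_dir p q H1 H2) as [r [Hr H]]. exists r. split; auto. apply G_P; auto. Qed.
Lemma one_G : mem one G.
Proof. apply filt. Qed.
Lemma one_P : mem one P.
Proof. apply HP. Qed.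
Lemma le_trans p q r : mem p P -> mem q P -> mem r P -> leP mem ur le p q -> leP mem ur le q r ->
  leP mem ur le p r.
Proof. destruct HP as [_ [_ [_ [_ [_ [H _]]]]]]. eauto. Qed.
Lemma le_refl p : mem p P -> leP mem ur le p p.
Proof. destruct HP as [_ [_ [_ [_ [H _]]]]]. eauto. Qed.


Definition condE u S z := exists w, D w /\ exists p, D p /\ exists y, D y /\
  pair_in mem ur u w p /\ pair_in mem ur S w y /\ is_pair mem ur z y p.
Definition StepE u S v :=
  (ur u /\ ~ ur v /\ forall z, D z -> (mem z v <-> is_pair mem ur z u one)) \/
  (~ ur u /\ ~ ur v /\ forall z, D z -> (mem z v <-> condE u S z)).

Lemma Def_StepE : Def (fun e => StepE (e 0) (e 1) (e 2)).
Proof. unfold StepE, condE. dtac. Qed.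

Lemma mem_D v z : D v -> mem z v -> D z.
Proof. intros Hv Hz. exact (trD v z Hv Hz). Qed.

Lemma Sdet_E : forall u S S' v v', D u -> D S -> D S' -> D v -> D v' ->
  Good Rch u S -> Good Rch u S' -> FunOn Rch u S S' -> StepE u S v -> StepE u S' v' -> v = v'.
Proof.
  intros u S S' v v' Du DS DS' Dv Dv' GD GD' F H H'.
  destruct H as [[Hu [Hv Hm1]]|[Hu [Hv Hm1]]]; destruct H' as [[Hu' [Hv' Hm2]]|[Hu' [Hv' Hm2]]];
    try contradiction.
  - apply extA; auto. intros z. split; intros Hz.
    + apply Hm2. exact (mem_D v z Dv Hz). apply Hm1; auto. exact (mem_D v z Dv Hz).
    + apply Hm1. exact (mem_D v' z Dv' Hz). apply Hm2; auto. exact (mem_D v' z Dv' Hz).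
  - apply extA; auto. intros z. split; intros Hz.
    + assert (Dz : D z) by exact (mem_D v z Dv Hz).
      apply Hm2; auto. apply Hm1 in Hz; auto. destruct Hz as [w [Dw [p [Dp [y [Dy [H1 [H2 H3]]]]]]]].
      exists w. split; auto. exists p. split; auto. exists y. split; auto. split; auto. split; auto.
      destruct (GD' w (ex_intro _ p H1)) as [y' Hy']. rewrite (F w y y' (ex_intro _ p H1) H2 Hy'). exact Hy'.
    + assert (Dz : D z) by exact (mem_D v' z Dv' Hz).
      apply Hm1; auto. apply Hm2 in Hz; auto. destruct Hz as [w [Dw [p [Dp [y [Dy [H1 [H2 H3]]]]]]]].
      exists w. split; auto. exists p. split; auto. exists y. split; auto. split; auto. split; auto.
      destruct (GD w (ex_intro _ p H1)) as [y' Hy']. rewrite <- (F w y' y (ex_intro _ p H1) Hy' H2). exact Hy'.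
Qed.

Lemma Sex_E : forall u S, D u -> D S -> Good Rch u S -> FunOn Rch u S S -> exists v, D v /\ StepE u S v.
Proof.
  intros u S Du DS GD F. destruct (classic (ur u)) as [Hu|Hu].
  - destruct (pair_ex u one Du Honem) as [z0 [Dz0 Hz0]].
    destruct (singD z0 Dz0) as [s [Ds [Hsu Hsm]]]. exists s. split; auto. left.
    split; auto. split; auto. intros z Dz. rewrite Hsm. split.
    + intros ->; auto.
    + intros Hz. exact (pair_uniq _ _ _ _ Hz Hz0).
  - destruct (union2 S DS) as [A [DA HA]]. destruct (union2 u Du) as [B [DB HB]].
    destruct (unionD2 A B DA DB) as [X [DX [HAX HBX]]].
    destruct (pow2 X DX) as [C [DC HC]].
    destruct (sepA (condE u S) C) as [v [Dv [Hvu Hvm]]].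
    { unfold condE. dtac. }
    { exact DC. }
    exists v. split; auto. right. split; auto. split; auto. intros z Dz. rewrite Hvm. split; [tauto|].
    intros Hc. split; auto. destruct Hc as [w [Dw [p [Dp [y [Dy [H1 [H2 H3]]]]]]]].
    apply (HC z y p Dz H3).
    + apply HAX. eapply pin_r; eauto.
    + apply HBX. eapply pin_r; eauto.
Qed.

Lemma Def_Rch2 : Def (fun e => Rch (e 0) (e 1)). Proof. exact Def_Rch. Qed.

Lemma pin_pair_ex t a b : D t -> D a -> D b -> (forall z, D z -> is_pair mem ur z a b -> mem z t) ->
  pair_in mem ur t a b.
Proof. intros Dt Da Db H. destruct (pair_ex a b Da Db) as [z [Dz Hz]]. exists z. auto. Qed.

Lemma oldname_pair t w p : old_name mem ur P t -> ~ ur t -> pair_in mem ur t w p ->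
  old_name mem ur P w /\ mem p P.
Proof.
  intros Ho Hu [z [Hz Hp]]. inversion Ho; subst; [contradiction|].
  destruct (H0 z Hz) as [s [p' [Hp' [Hs HP']]]]. destruct (pair_inj _ _ _ _ _ Hp Hp') as [<- <-]. auto.
Qed.

Lemma E_ok : forall t, D t -> old_name mem ur P t -> forall S s, D S -> Cert Rch StepE S ->
  pair_in mem ur S t s -> new_name mem ur P le s /\ forall x, old_eval mem ur G t x -> new_eval mem ur P le G s x.
Proof.
  intros t. induction t as [t IH] using (well_founded_ind Rch_wf). intros Dt Ho S s DS CS Hin.
  destruct (rec_props Rch StepE Rch_wf Sdet_E S t s DS CS Hin) as [_ [Ds [GD [St _]]]].
  destruct St as [[Ht [Hs Hsm]]|[Ht [Hs Hsm]]].
  - assert (Hsm' : forall z, mem z s <-> is_pair mem ur z t one).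
    { intros z. split; intros Hz.
      - apply Hsm; auto. exact (mem_D s z Ds Hz).
      - destruct (pair_ex t one Dt Honem) as [z0 [Dz0 Hz0]]. rewrite (pair_uniq _ _ _ _ Hz Hz0).
        apply Hsm; auto. }
    split.
    + constructor; auto.
      * intros z Hz. exists t, one. split. apply Hsm'; auto. split. apply one_P. right; auto.
      * intros a p y q _ [z1 [Hz1 Hp1]] [z2 [Hz2 Hp2]] Hay. exfalso. apply Hay.
        apply Hsm' in Hz1. apply Hsm' in Hz2.
        destruct (pair_inj _ _ _ _ _ Hp1 Hz1) as [-> _]. destruct (pair_inj _ _ _ _ _ Hp2 Hz2) as [-> _]. auto.
    + intros x Hx. inversion Hx; subst; [|contradiction].
      destruct (pair_ex x one Dt Honem) as [z0 [Dz0 Hz0]].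
      apply (new_eval_ur mem ur P le G s x one); auto. exists z0. split; auto. apply Hsm'; auto.
      apply one_G.
  - assert (Hsm' : forall z, mem z s <-> D z /\ condE t S z).
    { intros z. split; intros Hz.
      - assert (Dz : D z) by exact (mem_D s z Ds Hz). split; auto. apply Hsm; auto.
      - apply Hsm; apply Hz. }
    assert (Cw : forall z, mem z s -> exists w p y, pair_in mem ur t w p /\ pair_in mem ur S w y /\
       is_pair mem ur z y p /\ new_name mem ur P le y /\ mem p P /\ old_name mem ur P w).
    { intros z Hz. apply Hsm' in Hz. destruct Hz as [Dz [w [Dw [p [Dp [y [Dy [H1 [H2 H3]]]]]]]]].
      destruct (oldname_pair t w p Ho Ht H1) as [Hw Hp].
      exists w, p, y. split; auto. split; auto. split; auto. split; auto.
      exact (proj1 (IH w (ex_intro _ p H1) Dw Hw S y DS CS H2)). }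
    assert (NoUr : forall a p, pair_in mem ur s a p -> ~ ur a).
    { intros a p [z [Hz Hp]] Ha. destruct (Cw z Hz) as [w [p' [y [_ [_ [Hp' [Hy _]]]]]]].
      destruct (pair_inj _ _ _ _ _ Hp Hp') as [-> _]. exact (newname_nur y Hy Ha). }
    split.
    + constructor; auto.
      * intros z Hz. destruct (Cw z Hz) as [w [p [y [_ [_ [Hp [Hy [HpP _]]]]]]]].
        exists y, p. auto.
      * intros a p y q Ha Hap. exfalso. exact (NoUr a p Hap Ha).
    + intros x Hx. inversion Hx; subst; [contradiction|].
      apply new_eval_set; auto.
      * intros [a [p [Ha [Hap _]]]]. exact (NoUr a p Hap Ha).
      * intros z Hz. destruct (H1 z Hz) as [w [p [Hwp [HpG Hev]]]].
        destruct (GD w (ex_intro _ p Hwp)) as [y Hy].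
        destruct (pair_in_D _ _ _ Dt Hwp) as [Dw Dp]. destruct (pair_in_D _ _ _ DS Hy) as [_ Dy].
        destruct (oldname_pair t w p Ho Ht Hwp) as [Hw _].
        destruct (IH w (ex_intro _ p Hwp) Dw Hw S y DS CS Hy) as [Hny Hey].
        exists y, p. split; [|split; [|split]]; auto.
        apply pin_pair_ex; auto. intros z1 Dz1 Hz1. apply Hsm'. split; auto.
        exists w. split; auto. exists p. split; auto. exists y. auto.
      * intros y p Hyp Hny HpG. destruct Hyp as [z [Hz Hp]].
        destruct (Cw z Hz) as [w [p' [y' [Hwp [Hwy [Hp' [_ [_ Hw]]]]]]]].
        destruct (pair_inj _ _ _ _ _ Hp Hp') as [<- <-].
        destruct (H2 w p Hwp HpG) as [z' [Hz' Hev]].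
        destruct (pair_in_D _ _ _ Dt Hwp) as [Dw _].
        exists z'. split; auto. apply (IH w (ex_intro _ p Hwp) Dw Hw S y DS CS Hwy); auto.
Qed.

Definition condF u S z :=
  (exists y, D y /\ exists p, D p /\ exists a, D a /\ exists q, D q /\ exists r, D r /\
     pair_in mem ur u y p /\ ur a /\ pair_in mem ur y a q /\ mem r P /\
     leP mem ur le r p /\ leP mem ur le r q /\ is_pair mem ur z a r) \/
  (exists y, D y /\ exists p, D p /\ exists y', D y' /\ exists r, D r /\
     pair_in mem ur u y p /\ ~ ur y /\ pair_in mem ur S y y' /\ mem r P /\ leP mem ur le r p /\
     (forall a, D a -> forall q, D q -> ur a -> pair_in mem ur y a q -> ~ compatible mem ur P le r q) /\
     is_pair mem ur z y' r).
Definition StepF u S v :=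
  (ur u /\ v = u) \/ (~ ur u /\ ~ ur v /\ forall z, D z -> (mem z v <-> condF u S z)).

Lemma Def_StepF : Def (fun e => StepF (e 0) (e 1) (e 2)).
Proof. unfold StepF, condF. dtac. Qed.

Lemma condF_tr u S S' z : Good Rch u S' -> FunOn Rch u S S' -> condF u S z -> condF u S' z.
Proof.
  intros GD F [H|H]; [left; exact H|right].
  destruct H as [y [Dy [p [Dp [y' [Dy' [r [Dr [H1 [H2 [H3 H4]]]]]]]]]]].
  exists y. split; auto. exists p. split; auto. exists y'. split; auto. exists r. split; auto.
  split; auto. split; auto. split; auto.
  destruct (GD y (ex_intro _ p H1)) as [y'' Hy'']. rewrite (F y y' y'' (ex_intro _ p H1) H3 Hy''). exact Hy''.
Qed.

Lemma FunOn_sym R u S S' : FunOn R u S S' -> FunOn R u S' S.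
Proof. intros F w y y' Hw Hy Hy'. symmetry. exact (F w y' y Hw Hy' Hy). Qed.

Lemma Sdet_F : forall u S S' v v', D u -> D S -> D S' -> D v -> D v' ->
  Good Rch u S -> Good Rch u S' -> FunOn Rch u S S' -> StepF u S v -> StepF u S' v' -> v = v'.
Proof.
  intros u S S' v v' Du DS DS' Dv Dv' GD GD' F H H'.
  destruct H as [[Hu ->]|[Hu [Hv Hm1]]]; destruct H' as [[Hu' ->]|[Hu' [Hv' Hm2]]];
    try contradiction; auto.
  apply extA; auto. intros z. split; intros Hz.
  - assert (Dz : D z) by exact (mem_D v z Dv Hz).
    apply Hm2; auto. apply Hm1 in Hz; auto. exact (condF_tr u S S' z GD' F Hz).
  - assert (Dz : D z) by exact (mem_D v' z Dv' Hz).
    apply Hm1; auto. apply Hm2 in Hz; auto. exact (condF_tr u S' S z GD (FunOn_sym _ _ _ _ F) Hz).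
Qed.

Lemma Sex_F : forall u S, D u -> D S -> Good Rch u S -> FunOn Rch u S S -> exists v, D v /\ StepF u S v.
Proof.
  intros u S Du DS GD F. destruct (classic (ur u)) as [Hu|Hu].
  - exists u. split; auto. left; auto.
  - destruct (union2 S DS) as [A [DA HA]]. destruct (union2 u Du) as [B [DB HB]].
    destruct (union2 B DB) as [B' [DB' HB']].
    destruct (unionA B' DB') as [B'' [DB'' HB'']].
    destruct (unionD2 A B'' DA DB'') as [X1 [DX1 [HAX HBX]]].
    destruct (unionD2 X1 P DX1 HPm) as [X [DX [HX1 HPX]]].
    destruct (pow2 X DX) as [C [DC HC]].
    destruct (sepA (condF u S) C) as [v [Dv [Hvu Hvm]]].
    { unfold condF. dtac. }
    { exact DC. }
    exists v. split; auto. right. split; auto. split; auto. intros z Dz. rewrite Hvm. split; [tauto|].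
    intros Hc. split; auto. destruct Hc as [H|H].
    + destruct H as [y [Dy [p [Dp [a [Da [q [Dq [r [Dr [H1 [H2 [H3 [H4 [H5 [H6 H7]]]]]]]]]]]]]]]].
      apply (HC z a r Dz H7); auto.
      apply HX1, HBX. destruct H3 as [z' [Hz' Hp']].
      destruct (pair_memb z' a q Hp') as [s1 [_ [Hs1 [Has1 _]]]].
      assert (HyB : mem y B) by (eapply pin_l; eauto).
      apply (HB'' s1 a Has1). apply (HB' y z' s1 HyB Hz' Hs1).
    + destruct H as [y [Dy [p [Dp [y' [Dy' [r [Dr [H1 [H2 [H3 [H4 [H5 [H6 H7]]]]]]]]]]]]]].
      apply (HC z y' r Dz H7); auto.
      apply HX1, HAX. eapply pin_r; eauto.
Qed.

Lemma newname_pair u y p : new_name mem ur P le u -> pair_in mem ur u y p ->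
  mem p P /\ (new_name mem ur P le y \/ ur y).
Proof.
  intros Hn [z [Hz Hp]]. inversion Hn; subst. destruct (H0 z Hz) as [y' [p' [Hp' [HpP Hy]]]].
  destruct (pair_inj _ _ _ _ _ Hp Hp') as [<- <-]. auto.
Qed.

Lemma newname_incomp u a p y q : new_name mem ur P le u -> ur a -> pair_in mem ur u a p ->
  pair_in mem ur u y q -> a <> y -> ~ compatible mem ur P le p q.
Proof. intros Hn. inversion Hn; subst. eauto. Qed.

Lemma gen_avoid y p : D y -> new_name mem ur P le y -> mem p G ->
  ~ (exists a q, ur a /\ pair_in mem ur y a q /\ mem q G) ->
  exists r, mem r G /\ leP mem ur le r p /\
    forall a q, ur a -> pair_in mem ur y a q -> ~ compatible mem ur P le r q.
Proof.
  intros Dy Hny HpG Hno.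
  destruct (sepA (fun r => (exists a, D a /\ exists q, D q /\ ur a /\ pair_in mem ur y a q /\ leP mem ur le r q) \/
     (forall a, D a -> forall q, D q -> ur a -> pair_in mem ur y a q -> ~ compatible mem ur P le r q)) P)
     as [Dn [DDn [_ HDn]]].
  { dtac. }
  { exact HPm. }
  destruct HG as [_ Hgen]. destruct (Hgen Dn DDn) as [r0 [Hr0 Hr0G]].
  { split. intros d Hd. apply HDn in Hd. apply Hd.
    intros p0 Hp0. destruct (classic (exists a q, ur a /\ pair_in mem ur y a q /\ compatible mem ur P le p0 q))
      as [[a [q [Ha [Hyaq [r' [Hr'P [H1 H2]]]]]]]|Hn].
    - exists r'. split; auto. apply HDn. split; auto. left.
      destruct (pair_in_D _ _ _ Dy Hyaq) as [Da Dq].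
      exists a. split; auto. exists q. split; auto.
    - exists p0. split. apply HDn. split; auto. right. intros a _ q _ Ha Hyaq Hc. apply Hn. eauto.
      apply le_refl; auto. }
  apply HDn in Hr0. destruct Hr0 as [Hr0P [[a [Da [q [Dq [Ha [Hyaq Hle]]]]]]|Hinc]].
  - exfalso. apply Hno. exists a, q. split; auto. split; auto.
    apply (G_up r0 q); auto. apply (newname_pair y a q Hny Hyaq).
  - destruct (G_dir p r0 HpG Hr0G) as [r [HrG [H1 H2]]]. exists r. split; auto. split; auto.
    intros a q Ha Hyaq [s [HsP [Hs1 Hs2]]].
    destruct (pair_in_D _ _ _ Dy Hyaq) as [Da Dq].
    apply (Hinc a Da q Dq Ha Hyaq). exists s. split; auto. split; auto.
    apply (le_trans s r r0); auto. apply G_P; auto.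
Qed.

Lemma new_eval_inv u v : new_eval mem ur P le G u v ->
  (exists a p, ur a /\ pair_in mem ur u a p /\ mem p G /\ v = a) \/
  (~ (exists a p, ur a /\ pair_in mem ur u a p /\ mem p G) /\ ~ ur v /\
   (forall z, mem z v -> exists y p, pair_in mem ur u y p /\ new_name mem ur P le y /\ mem p G /\
        new_eval mem ur P le G y z) /\
   (forall y p, pair_in mem ur u y p -> new_name mem ur P le y -> mem p G ->
        exists z, mem z v /\ new_eval mem ur P le G y z)).
Proof. intros H. destruct H; [left; exists a, p; auto | right; auto]. Qed.

Lemma F_ok : forall u, D u -> new_name mem ur P le u -> forall S g, D S -> Cert Rch StepF S ->
  pair_in mem ur S u g -> old_name mem ur P g /\
  forall v, new_eval mem ur P le G u v -> ~ ur v -> old_eval mem ur G g v.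
Proof.
  intros u. induction u as [u IH] using (well_founded_ind Rch_wf). intros Du Hnu S g DS CS Hin.
  destruct (rec_props Rch StepF Rch_wf Sdet_F S u g DS CS Hin) as [_ [Dg [GD [St _]]]].
  assert (Hu : ~ ur u) by exact (newname_nur u Hnu).
  destruct St as [[Hu' _]|[_ [Hg Hgm]]]; [contradiction|].
  assert (Hgm' : forall z, mem z g <-> D z /\ condF u S z).
  { intros z. split; intros Hz.
    - assert (Dz : D z) by exact (mem_D g z Dg Hz). split; auto. apply Hgm; auto.
    - apply Hgm; apply Hz. }
  split.
  - apply old_name_set; auto. intros z Hz. apply Hgm' in Hz. destruct Hz as [Dz [H|H]].
    + destruct H as [y [Dy [p [Dp [a [Da [q [Dq [r [Dr [H1 [H2 [H3 [H4 [H5 [H6 H7]]]]]]]]]]]]]]]].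
      exists a, r. split; auto. split; auto. apply old_name_ur; auto.
    + destruct H as [y [Dy [p [Dp [y' [Dy' [r [Dr [H1 [H2 [H3 [H4 [H5 [H6 H7]]]]]]]]]]]]]].
      exists y', r. split; auto. split; auto.
      destruct (newname_pair u y p Hnu H1) as [_ [Hny|Hy]]; [|contradiction].
      exact (proj1 (IH y (ex_intro _ p H1) Dy Hny S y' DS CS H3)).
  - intros v Hev Hv. destruct (new_eval_inv u v Hev) as [[a [p [Ha [_ [_ ->]]]]]|[Hno [_ [H1 H2]]]];
      [contradiction|].
    apply old_eval_set; auto.
    + intros z Hz. destruct (H1 z Hz) as [y [p [Hyp [Hny [HpG Hyz]]]]].
      destruct (pair_in_D _ _ _ Du Hyp) as [Dy Dp].
      destruct (GD y (ex_intro _ p Hyp)) as [y' Hyy']. destruct (pair_in_D _ _ _ DS Hyy') as [_ Dy'].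
      destruct (new_eval_inv y z Hyz) as [[a [q [Ha [Hyaq [HqG ->]]]]]|[Hnoy [Hz' _]]].
      * destruct (G_dir p q HpG HqG) as [r [HrG [Hrp Hrq]]].
        destruct (pair_in_D _ _ _ Dy Hyaq) as [Da Dq].
        assert (Dr : D r) by exact (P_D r (G_P r HrG)).
        destruct (pair_ex a r Da Dr) as [z1 [Dz1 Hz1]].
        exists a, r. split; [|split; auto; apply old_eval_ur; auto].
        exists z1. split; auto. apply Hgm'. split; auto. left.
        exists y. split; auto. exists p. split; auto. exists a. split; auto. exists q. split; auto.
        exists r. split; auto. split; auto. split; auto. split; auto. split. apply G_P; auto. auto.
      * destruct (gen_avoid y p Dy Hny HpG Hnoy) as [r [HrG [Hrp Hinc]]].
        assert (Dr : D r) by exact (P_D r (G_P r HrG)).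
        destruct (pair_ex y' r Dy' Dr) as [z1 [Dz1 Hz1]].
        exists y', r. split; [|split; auto].
        -- exists z1. split; auto. apply Hgm'. split; auto. right.
           exists y. split; auto. exists p. split; auto. exists y'. split; auto. exists r. split; auto.
           split; auto. split. exact (newname_nur y Hny). split; auto. split. apply G_P; auto.
           split; [exact Hrp|]. split; [|exact Hz1]. intros a _ q _ Ha Hyaq. exact (Hinc a q Ha Hyaq).
        -- exact (proj2 (IH y (ex_intro _ p Hyp) Dy Hny S y' DS CS Hyy') z Hyz Hz').
    + intros s r [z1 [Hz1 Hp1]] HrG. apply Hgm' in Hz1. destruct Hz1 as [Dz1 [H|H]].
      * destruct H as [y [Dy [p [Dp [a [Da [q [Dq [r' [Dr [H1' [H2' [H3 [H4 [H5 [H6 H7]]]]]]]]]]]]]]]].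
        destruct (pair_inj _ _ _ _ _ Hp1 H7) as [-> <-].
        destruct (newname_pair u y p Hnu H1') as [HpP [Hny|Hyu]].
        2: { exfalso. destruct H3 as [z' [Hz' _]]. exact (ur_nomem y z' Hyu Hz'). }
        destruct (newname_pair y a q Hny H3) as [HqP _].
        assert (HpG : mem p G) by exact (G_up r p HrG HpP H5).
        assert (HqG : mem q G) by exact (G_up r q HrG HqP H6).
        destruct (H2 y p H1' Hny HpG) as [z [Hz Hyz]].
        exists z. split; auto.
        destruct (new_eval_inv y z Hyz) as [[a' [q' [Ha' [Hya'q' [Hq'G ->]]]]]|[Hnoy _]].
        -- destruct (classic (a = a')) as [<-|Hne]. apply old_eval_ur; auto.
           exfalso. exact (newname_incomp y a q a' q' Hny H2' H3 Hya'q' Hne (G_compat q q' HqG Hq'G)).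
        -- exfalso. apply Hnoy. exists a, q. auto.
      * destruct H as [y [Dy [p [Dp [y' [Dy' [r' [Dr [H1' [H2' [H3 [H4 [H5 [H6 H7]]]]]]]]]]]]]].
        destruct (pair_inj _ _ _ _ _ Hp1 H7) as [-> <-].
        destruct (newname_pair u y p Hnu H1') as [HpP [Hny|Hyu]]; [|contradiction].
        assert (HpG : mem p G) by exact (G_up r p HrG HpP H5).
        destruct (H2 y p H1' Hny HpG) as [z [Hz Hyz]].
        exists z. split; auto.
        destruct (new_eval_inv y z Hyz) as [[a [q [Ha [Hyaq [HqG ->]]]]]|[_ [Hz' _]]].
        -- exfalso. destruct (pair_in_D _ _ _ Dy Hyaq) as [Da Dq].
           exact (H6 a Da q Dq Ha Hyaq (G_compat r q HrG HqG)).
        -- exact (proj2 (IH y (ex_intro _ p H1') Dy Hny S y' DS CS H3) z Hyz Hz').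
Qed.

Lemma main_inner : forall x, ext_new mem ur P le m G x <-> ext_old mem ur P m G x.
Proof.
  intros x. split.
  - intros [t [Htm [Hnt Hev]]]. assert (Dt : D t) by exact Htm.
    destruct (classic (ur x)) as [Hx|Hx].
    + destruct (new_eval_inv t x Hev) as [[a [p [Ha [Hap [_ ->]]]]]|[_ [Hx' _]]]; [|contradiction].
      exists a. split. exact (proj1 (pair_in_D _ _ _ Dt Hap)). split.
      apply old_name_ur; auto. apply old_eval_ur; auto.
    + destruct (rec_total Rch StepF Def_Rch Def_StepF Rch_wf Rch_D Rch_bound Sdet_F Sex_F t Dt)
        as [S [DS [CS [g Hg]]]].
      destruct (F_ok t Dt Hnt S g DS CS Hg) as [Hog Heg].
      destruct (rec_props Rch StepF Rch_wf Sdet_F S t g DS CS Hg) as [_ [Dg _]].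
      exists g. split; auto.
  - intros [t [Htm [Hot Hev]]]. assert (Dt : D t) by exact Htm.
    destruct (rec_total Rch StepE Def_Rch Def_StepE Rch_wf Rch_D Rch_bound Sdet_E Sex_E t Dt)
        as [S [DS [CS [s Hs]]]].
    destruct (E_ok t Dt Hot S s DS CS Hs) as [Hns Hes].
    destruct (rec_props Rch StepE Rch_wf Sdet_E S t s DS CS Hs) as [_ [Ds _]].
    exists s. split; auto.
Qed.

End Model.

Theorem mainTheorem20 (U : Type) (mem : U -> U -> Prop) (ur : U -> Prop)
  (HV : ZFU_universe mem ur)
  (m : U) (Hm : ctm_ZFU_R mem ur m)
  (P le one : U) (HPm : mem P m) (Hlem : mem le m) (Honem : mem one m)
  (HP : forcing_poset mem ur P le one)
  (G : U) (HG : generic mem ur P le one m G) :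
  forall x, ext_new mem ur P le m G x <-> ext_old mem ur P m G x.
Proof.
  exact (main_inner U mem ur HV m Hm P HPm P le one G HPm Hlem Honem HP HG).
Qed.
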